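(* Let $Y$ be a random simplicial complex on $[n]=\{0,\dots,n\}$ drawn from the lower model in the medial regime, with constants $0<p\le P<1$ such that $p\le p_\sigma\le P$ for all $\sigma$. Let $\mathcal U$ be the cover of $Y$ by the closed stars of its vertices. Then for any constant $0<\alpha<1$, asymptotically almost surely the nerve complex $\mathcal N(\mathcal U)$ contains the full $\lfloor\alpha\log_{(p^{-1})}n\rfloor$-dimensional skeleton of the simplex spanned by the vertex set of $Y$; in particular $\mathcal N(\mathcal U)$ is $\big(\lfloor\alpha\log_{(p^{-1})}n\rfloor-1\big)$-connected, asymptotically almost surely.
   Context: Lower model: each non-empty proper subset $\sigma\subsetneq[n]$ is included independently with probability $p_\sigma$ into a random hypergraph $X$, and $Y$ is the largest simplicial complex contained in $X$. Medial regime: $p,P\in(0,1)$ are independent of $n$. The closed star $\mathrm{St}(v)$ of a vertex $v$ is the union of all closed simplexes of $Y$ containing $v$. The nerve $\mathcal N(\mathcal U)$ has the vertices of $Y$ as vertices, and a set $S$ of vertices spans a simplex iff $\bigcap_{v\in S}\mathrm{St}(v)\neq\emptyset$. Asymptotically almost surely means with probability tending to $1$ as $n\to\infty$. *)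

(* Defs.v *)
From mathcomp Require Import all_boot all_order all_algebra.
From mathcomp Require Import reals exp.
Set Implicit Arguments. Unset Strict Implicit. Unset Printing Implicit Defensive.
Import Order.TTheory GRing.Theory Num.Theory.
Local Open Scope ring_scope.

Section LowerModel.
Variable n : nat.
Notation V := 'I_n.+1.

Definition proper_face (s : {set V}) : bool := (s != set0) && (s != setT).

(* Y = largest simplicial complex contained in the hypergraph X:
   the non-empty sets all of whose non-empty subsets lie in X *)
Definition lower_complex (X : {set {set V}}) : {set {set V}} :=
  [set s | (s != set0) &&
     [forall t : {set V}, ((t != set0) && (t \subset s)) ==> (t \in X)]].

Definition vertices (Y : {set {set V}}) : {set V} := [set v | [set v] \in Y].

Definition closed_star (Y : {set {set V}}) (v : V) : {set {set V}} :=
  [set t | (t != set0) &&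
     [exists s : {set V}, [&& s \in Y, v \in s & t \subset s]]].

(* S spans a simplex of the nerve of the cover by closed stars iff the closed
   stars of the vertices in S have non-empty common intersection, i.e. share a
   (non-empty) face *)
Definition nerve_simplex (Y : {set {set V}}) (S : {set V}) : bool :=
  [&& S != set0, S \subset vertices Y &
     [exists t : {set V}, [forall v in S, t \in closed_star Y v]]].

Definition nerve_contains_skeleton (Y : {set {set V}}) (k : int) : bool :=
  [forall S : {set V},
     [&& S != set0, S \subset vertices Y & (#|S|%:Z <= k + 1)%R]
       ==> nerve_simplex Y S].

Variable R : realType.

(* probability weight of a hypergraph X (supported on proper faces) in the
   lower model with independent inclusion probabilities ps *)
Definition hyp_weight (ps : {set V} -> R) (X : {set {set V}}) : R :=
  \prod_(s : {set V} | proper_face s) (if s \in X then ps s else 1 - ps s).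

Definition is_hypergraph (X : {set {set V}}) : bool :=
  [forall s in X, proper_face s].

Definition lower_prob (ps : {set V} -> R) (E : {set {set V}} -> bool) : R :=
  \sum_(X : {set {set V}} | is_hypergraph X && E (lower_complex X))
     hyp_weight ps X.

End LowerModel.

Definition skel_dim (R : realType) (alpha p : R) (n : nat) : int :=
  Num.floor (alpha * (ln (n%:R : R) / ln p^-1)).

(* Main.v *)
Require Import Defs.
From mathcomp Require Import all_boot all_order all_algebra.
From mathcomp Require Import reals exp.
From mathcomp Require Import sequences zify ring lra.
Import Order.TTheory GRing.Theory Num.Theory.
Local Open Scope ring_scope.

Module Aux.
Set Implicit Arguments. Unset Strict Implicit. Unset Printing Implicit Defensive.
Section Prod.
Variables (R : realType) (I : finType) (q : I -> R).
Definition phi i (b : bool) : R := if b then q i else 1 - q i.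
Definition mu (X : {set I}) : R := \prod_i phi i (i \in X).
Definition Ex (G : {set I} -> R) : R := \sum_X mu X * G X.

Lemma Ex1 : Ex (fun _ => 1) = 1.
Proof.
rewrite /Ex (eq_bigr (fun X => mu X)); last by move=> X _; rewrite mulr1.
have -> : 1 = \prod_(i : I) \sum_(b : bool) phi i b :> R.
  rewrite big1 // => i _; by rewrite big_bool /phi /= addrC subrK.
rewrite bigA_distr_bigA /=.
rewrite (reindex (fun g : {ffun I -> bool} => [set i | g i])) /=; last first.
  exists (fun X : {set I} => [ffun i => i \in X]) => g _.
    by apply/ffunP => i; rewrite ffunE inE.
  by apply/setP => i; rewrite inE ffunE.
apply: eq_bigr => g _; rewrite /mu; apply: eq_bigr => i _; by rewrite inE.
Qed.

Lemma Ec c G : (forall X, G X = G (X :\ c)) ->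
  Ex (fun X => (c \in X)%:R * G X) = q c * Ex G.
Proof.
move=> HG.
pose rho (X : {set I}) := \prod_(i | i != c) phi i (i \in X).
have muE X : mu X = phi c (c \in X) * rho X by rewrite /mu (bigD1 c).
have rhoD X : rho (X :\ c) = rho X.
  by apply: eq_bigr => i ic; rewrite !inE ic.
pose H (X : {set I}) := rho X * G X.
have HD X : H (X :\ c) = H X by rewrite /H rhoD -HG.
pose t (X : {set I}) := if c \in X then X :\ c else c |: X.
have tK : involutive t.
  move=> X; rewrite /t; case cX: (c \in X).
    by rewrite !inE eqxx /= setD1K.
  by rewrite setU11 setU1K // cX.
have S10 : \sum_(X : {set I} | c \in X) H X = \sum_(X : {set I} | c \notin X) H X.
  rewrite (reindex_inj (inv_inj tK)); apply: eq_big => X.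
    by rewrite /t; case cX: (c \in X); rewrite !inE ?eqxx ?cX.
  rewrite /t; case cX: (c \in X); first by rewrite !inE eqxx.
  by move=> _; rewrite -HD setU1K ?cX.
have EG : Ex G = \sum_(X : {set I} | c \notin X) H X.
  rewrite /Ex (bigID (fun X : {set I} => c \in X)) /=.
  rewrite (eq_bigr (fun X => q c * H X)); last first.
    by move=> X cX; rewrite muE /phi cX mulrA.
  rewrite [X in _ + X](eq_bigr (fun X => (1 - q c) * H X)); last first.
    by move=> X cX; rewrite muE /phi (negbTE cX) mulrA.
  by rewrite -!mulr_sumr S10 -mulrDl addrC subrK mul1r.
rewrite EG /Ex (bigID (fun X : {set I} => c \in X)) /=.
rewrite (eq_bigr (fun X => q c * H X)); last first.
  by move=> X cX; rewrite muE /phi cX mul1r -mulrA.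
rewrite [X in _ + X]big1; last first.
  by move=> X cX; rewrite (negbTE cX) mul0r mulr0.
by rewrite addr0 -mulr_sumr S10.
Qed.

Lemma EB (A : {set I}) (l : seq I) G : uniq l -> all (mem A) l ->
  (forall X, G X = G (X :\: A)) ->
  Ex (fun X => (\prod_(c <- l) (c \in X)%:R) * G X) = (\prod_(c <- l) q c) * Ex G.
Proof.
elim: l G => [|c l IH] G.
  move=> _ _ _; rewrite big_nil mul1r; apply: eq_bigr => X _; by rewrite big_nil mul1r.
move=> /= /andP[cl ul] /andP[cA lA] HG.
have -> : Ex (fun X => (\prod_(j <- c :: l) (j \in X)%:R) * G X)
   = Ex (fun X => (c \in X)%:R * ((\prod_(j <- l) (j \in X)%:R) * G X)).
  by apply: eq_bigr => X _; rewrite big_cons !mulrA.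
rewrite Ec; last first.
  move=> X; congr (_ * _).
    apply: eq_big_seq => j jl; rewrite !inE.
    by have -> : (j != c) by apply: contraNneq cl => <-.
  rewrite HG [in RHS]HG; congr G; apply/setP => i; rewrite !inE.
  by case: (i =P c) => // ->; rewrite cA.
by rewrite IH // big_cons mulrA.
Qed.

Lemma Eblocks (J : eqType) (r : seq J) (B : J -> {set I}) : uniq r ->
  (forall w w', w \in r -> w' \in r -> w != w' -> [disjoint B w & B w']) ->
  Ex (fun X => \prod_(w <- r) (1 - \prod_(c in B w) (c \in X)%:R))
    = \prod_(w <- r) (1 - \prod_(c in B w) q c).
Proof.
elim: r => [|w r IH].
  move=> _ _; rewrite big_nil; transitivity (Ex (fun _ => 1)); last exact: Ex1.
  apply: eq_bigr => X _; by rewrite big_nil.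
move=> /= /andP[wr ur] Hd.
rewrite big_cons.
have -> : Ex (fun X => \prod_(j <- w :: r) (1 - \prod_(c in B j) (c \in X)%:R))
  = Ex (fun X => \prod_(j <- r) (1 - \prod_(c in B j) (c \in X)%:R))
    - Ex (fun X => (\prod_(c <- enum (B w)) (c \in X)%:R) *
               \prod_(j <- r) (1 - \prod_(c in B j) (c \in X)%:R)).
  rewrite /Ex -sumrB; apply: eq_bigr => X _.
  by rewrite big_cons big_enum /= -mulrBr mulrBl mul1r.
rewrite (@EB (B w)) ?enum_uniq //; last first.
- move=> X; apply: eq_big_seq => j jr; congr (_ - _); apply: eq_bigr => c cj.
  rewrite !inE.
  have : [disjoint B w & B j].
    apply: Hd; rewrite ?inE ?eqxx ?jr ?orbT //.
    by apply: contraNneq wr => ->.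
  by move/disjointFl => /(_ c cj) ->.
- by apply/allP => c; rewrite mem_enum.
rewrite IH //; last first.
  by move=> x y xr yr; apply: Hd; rewrite inE ?xr ?yr orbT.
by rewrite big_enum /= -{1}[\prod_(j <- r) _]mul1r -mulrBl.
Qed.

End Prod.
Section App.
Variables (R : realType) (n : nat) (ps : {set 'I_n.+1} -> R).
Notation V := 'I_n.+1.

Definition qq (s : {set V}) : R := if proper_face s then ps s else 0.

Lemma muE X : mu qq X = if is_hypergraph X then hyp_weight ps X else 0.
Proof.
rewrite /mu (bigID (@proper_face n)) /=.
have -> : \prod_(i | proper_face i) phi qq i (i \in X) = hyp_weight ps X.
  by apply: eq_bigr => s sp; rewrite /phi /qq sp.
case: ifP => hX.
  rewrite big1 ?mulr1 // => s sp; move/forallP: hX => /(_ s) /implyP hX.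
  have sX : s \notin X by apply: contra sp => /hX.
  by rewrite /phi (negbTE sX) /qq (negbTE sp) subr0.
move/negbT: hX; rewrite negb_forall => /existsP [s]; rewrite negb_imply => /andP[sX sp].
by rewrite (bigD1 s) //= /phi sX /qq (negbTE sp) mul0r mulr0.
Qed.

Lemma lower_prob_Ex E :
  lower_prob ps E = Ex qq (fun X => (E (lower_complex X))%:R).
Proof.
rewrite /lower_prob /Ex big_mkcond; apply: eq_bigr => X _.
rewrite muE; case: (is_hypergraph X); case: (E _) => /=;
  by rewrite ?mulr1 ?mulr0 ?mul0r.
Qed.

Definition blk (T : {set V}) (w : V) : {set {set V}} :=
  [set w] |: [set [set v; w] | v in T].
Definition badf (T : {set V}) (X : {set {set V}}) : R :=
  \prod_(w in ~: T) (1 - \prod_(c in blk T w) (c \in X)%:R).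

Lemma blk_prop (T : {set V}) (w : V) (c : {set V}) : c \in blk T w -> (w \in c) && (c \subset w |: T).
Proof.
rewrite /blk !inE => /orP[/eqP -> | /imsetP [v vT ->]].
  by rewrite set11 /= sub1set setU11.
rewrite !inE eqxx orbT /=; apply/subsetP => x; rewrite !inE => /orP[]/eqP ->.
  by rewrite vT orbT.
by rewrite eqxx.
Qed.

Lemma blk_disj (T : {set V}) (w w' : V) : w \notin T -> w != w' -> [disjoint blk T w & blk T w'].
Proof.
move=> wT ww'; apply/pred0P => c /=; apply/negP => /andP[/blk_prop/andP[wc _] /blk_prop/andP[_ /subsetP sub]].
have := sub w wc; rewrite !inE (negbTE wT) orbF => /eqP ew.
by rewrite ew eqxx in ww'.
Qed.

Lemma E_badf (T : {set V}) : Ex qq (badf T) = \prod_(w in ~: T) (1 - \prod_(c in blk T w) qq c).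
Proof.
rewrite -big_enum /=.
transitivity (Ex qq (fun X => \prod_(w <- enum (~: T)) (1 - \prod_(c in blk T w) (c \in X)%:R))).
  by apply: eq_bigr => X _; rewrite /badf big_enum.
apply: Eblocks; first exact: enum_uniq.
move=> x y; rewrite !mem_enum inE => xT _; exact: blk_disj.
Qed.

Lemma badf_ge0 (T : {set V}) X : 0 <= badf T X.
Proof.
apply: prodr_ge0 => w _; rewrite subr_ge0; apply: prodr_ile1 => c _.
by case: (c \in X); rewrite ?ler01 ?lexx.
Qed.

Lemma pair_sub (t : {set V}) v w : t \subset [set v; w] -> t != set0 ->
  [\/ t = [set v], t = [set w] | t = [set v; w]].
Proof.
move=> /subsetP tsub /set0Pn [x xt].
have key y : y \in t -> (y == v) || (y == w) by move/tsub; rewrite !inE.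
case vt: (v \in t); case wt: (w \in t).
- apply: Or33; apply/setP => y; rewrite !inE; apply/idP/idP; first exact: key.
  by case/orP => /eqP ->.
- apply: Or31; apply/setP => y; rewrite !inE; apply/idP/idP; last by move/eqP ->.
  by move=> yt; case/orP: (key y yt) => // /eqP ey; rewrite -ey yt in wt.
- apply: Or32; apply/setP => y; rewrite !inE; apply/idP/idP; last by move/eqP ->.
  by move=> yt; case/orP: (key y yt) => // /eqP ey; rewrite -ey yt in vt.
- by case/orP: (key x xt) => /eqP ex; rewrite -ex xt in vt wt.
Qed.

Lemma set1_n0 (x : V) : [set x] != set0.
Proof. by apply/set0Pn; exists x; rewrite set11. Qed.

Lemma bad_witness X (S : {set V}) : S != set0 ->
  S \subset vertices (lower_complex X) ->
  ~~ nerve_simplex (lower_complex X) S -> badf S X = 1.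
Proof.
move=> S0 Ssub nn; rewrite /badf; apply: big1 => w; rewrite inE => wS.
case: (boolP [forall c in blk S w, c \in X]) => H; last first.
  move: H; rewrite negb_forall => /existsP [c]; rewrite negb_imply => /andP[cb cX].
  by rewrite (bigD1 c) //= (negbTE cX) mul0r subr0.
exfalso; move/negP: nn; apply; rewrite /nerve_simplex S0 Ssub /=.
apply/existsP; exists [set w]; apply/forallP => v; apply/implyP => vS.
have inb c : c \in blk S w -> c \in X by move=> cb; move/forallP: H => /(_ c) /implyP; apply.
rewrite /closed_star inE set1_n0 /=; apply/existsP; exists [set v; w].
rewrite !inE eqxx /= sub1set !inE eqxx orbT andbT.
apply/andP; split.
  by apply/set0Pn; exists v; rewrite !inE eqxx.
apply/forallP => t; apply/implyP => /andP[t0 tsub].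
have vX : [set v] \in X.
  move/subsetP: Ssub => /(_ v vS); rewrite /vertices inE /lower_complex inE => /andP[_].
  move/forallP => /(_ [set v]) /implyP; apply; by rewrite set1_n0 subxx.
case: (pair_sub tsub t0) => ->.
- exact: vX.
- by apply: inb; rewrite /blk !inE eqxx.
- by apply: inb; rewrite /blk !inE; apply/orP; right; apply/imsetP; exists v.
Qed.

Lemma surj_exists m (S : {set V}) : S != set0 -> (#|S| <= m)%N ->
  exists f : {ffun 'I_m -> V}, f @: [set: 'I_m] = S.
Proof.
move=> /set0Pn [x0 xS] Sm.
exists [ffun i : 'I_m => nth x0 (enum S) i].
apply/setP => y; apply/imsetP/idP.
  move=> [i _ ->]; rewrite ffunE.
  case: (ltnP i (size (enum S))) => hi.
    by rewrite -mem_enum mem_nth.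
  by rewrite nth_default.
move=> yS.
have hi : (index y (enum S) < m)%N.
  by apply: leq_trans Sm; rewrite cardE index_mem mem_enum.
exists (Ordinal hi); first by rewrite inE.
by rewrite ffunE /= nth_index // mem_enum.
Qed.

Lemma not_good X (k : int) m : k + 1 = m%:Z ->
  ~~ nerve_contains_skeleton (lower_complex X) k ->
  exists f : {ffun 'I_m -> V}, badf (f @: [set: 'I_m]) X = 1.
Proof.
move=> km; rewrite /nerve_contains_skeleton negb_forall => /existsP [S].
rewrite negb_imply => /andP[/and3P[S0 Ssub Sk] nn].
rewrite km lez_nat in Sk.
have [f fE] := surj_exists S0 Sk.
by exists f; rewrite fE; apply: bad_witness.
Qed.

Lemma blk_card (T : {set V}) w c : c \in blk T w -> (#|c| <= 2)%N.
Proof.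
rewrite /blk !inE => /orP[/eqP -> | /imsetP [v vT ->]]; first by rewrite cards1.
by rewrite cards2; case: (v != w).
Qed.

Lemma blk_proper (T : {set V}) w c : (2 <= n)%N -> c \in blk T w -> proper_face c.
Proof.
move=> n2 cb; rewrite /proper_face; apply/andP; split.
  by apply/set0Pn; exists w; case/andP: (blk_prop cb).
apply/negP => /eqP cT; have := blk_card cb; rewrite cT cardsT card_ord.
by move=> h; have := leq_ltn_trans n2 h; rewrite ltnn.
Qed.

Variables (p P : R).
Hypotheses (hp : 0 < p) (pP : p <= P) (P1 : P < 1)
  (hps : forall s : {set V}, proper_face s -> p <= ps s <= P).

Lemma qq01 s : 0 <= qq s <= 1.
Proof.
rewrite /qq; case: ifP => sp; last by rewrite lexx ler01.
case/andP: (hps sp) => h1 h2; apply/andP; split.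
  exact: le_trans (ltW hp) h1.
exact: le_trans h2 (ltW P1).
Qed.

Lemma mu_ge0 X : 0 <= mu qq X.
Proof.
apply: prodr_ge0 => s _; rewrite /phi; case: (s \in X); case/andP: (qq01 s) => // _.
by rewrite subr_ge0.
Qed.

Lemma E_badf_le (T : {set V}) m : (2 <= n)%N -> (#|T| <= m)%N ->
  Ex qq (badf T) <= (1 - p ^+ m.+1) ^+ (n.+1 - m).
Proof.
move=> n2 Tm; rewrite E_badf.
have p1 : p <= 1 by apply: le_trans pP (ltW P1).
have pm01 : 0 <= p ^+ m.+1 <= 1 by apply/andP; split; [exact: exprn_ge0 (ltW hp) | exact: exprn_ile1 (ltW hp) p1].
apply: (@le_trans _ _ (\prod_(w in ~: T) (1 - p ^+ m.+1))).
  apply: ler_prod => w _; apply/andP; split.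
    by rewrite subr_ge0; apply: prodr_ile1 => c _; exact: qq01.
  rewrite lerD2l lerN2.
  apply: (@le_trans _ _ (\prod_(c in blk T w) p)).
    rewrite prodr_const; apply: ler_wiXn2l => //; first exact: ltW.
    rewrite /blk cardsU1 -[m.+1]add1n; apply: leq_add; first by case: (_ \notin _).
    exact: leq_trans (leq_imset_card _ _) Tm.
  apply: ler_prod => c cb; rewrite (ltW hp) /=.
  by rewrite /qq (blk_proper n2 cb); case/andP: (hps (blk_proper n2 cb)).
rewrite prodr_const; apply: ler_wiXn2l.
- by rewrite subr_ge0; case/andP: pm01.
- by rewrite lerBlDr lerDl; case/andP: pm01.
have h := cardsC T; rewrite card_ord in h.
lia.
Qed.

Lemma bad_total (k : int) m : (2 <= n)%N -> k + 1 = m%:Z ->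
  Ex qq (fun X => (~~ nerve_contains_skeleton (lower_complex X) k)%:R)
  <= (n.+1)%:R ^+ m * (1 - p ^+ m.+1) ^+ (n.+1 - m).
Proof.
move=> n2 km.
apply: (@le_trans _ _ (Ex qq (fun X => \sum_(f : {ffun 'I_m -> V}) badf (f @: [set: 'I_m]) X))).
  apply: ler_sum => X _; apply: ler_wpM2l; first exact: mu_ge0.
  case: (boolP (nerve_contains_skeleton _ _)) => g /=.
    by apply: sumr_ge0 => f _; exact: badf_ge0.
  have [f0 f0E] := not_good km g.
  rewrite (bigD1 f0) //= f0E lerDl; apply: sumr_ge0 => f _; exact: badf_ge0.
have -> : Ex qq (fun X => \sum_(f : {ffun 'I_m -> V}) badf (f @: [set: 'I_m]) X)
   = \sum_(f : {ffun 'I_m -> V}) Ex qq (badf (f @: [set: 'I_m])).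
  rewrite /Ex; under eq_bigr do rewrite mulr_sumr.
  by rewrite exchange_big.
apply: (@le_trans _ _ (\sum_(f : {ffun 'I_m -> V}) (1 - p ^+ m.+1) ^+ (n.+1 - m))).
  apply: ler_sum => f _; apply: E_badf_le => //.
  by apply: leq_trans (leq_imset_card _ _) _; rewrite cardsT card_ord.
by rewrite sumr_const card_ffun !card_ord -(mulr_natl ((1 - p ^+ m.+1) ^+ (n.+1 - m))) natrX.
Qed.

Lemma lower_prob_ge (k : int) m : (2 <= n)%N -> k + 1 = m%:Z ->
  1 - (n.+1)%:R ^+ m * (1 - p ^+ m.+1) ^+ (n.+1 - m)
  <= lower_prob ps (fun Y => nerve_contains_skeleton Y k).
Proof.
move=> n2 km; rewrite lower_prob_Ex.
have -> : Ex qq (fun X => (nerve_contains_skeleton (lower_complex X) k)%:R)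
  = Ex qq (fun _ => 1) - Ex qq (fun X => (~~ nerve_contains_skeleton (lower_complex X) k)%:R).
  rewrite /Ex -sumrB; apply: eq_bigr => X _; rewrite -mulrBr.
  by case: (nerve_contains_skeleton _ _); rewrite /= ?subr0 ?subrr.
by rewrite Ex1 lerD2l lerN2; apply: bad_total.
Qed.

End App.
Lemma expR_cube (R : realType) (z : R) : 0 <= z -> z ^+ 3 / 27 <= expR z.
Proof.
move=> z0.
have -> : expR z = expR (z / 3) ^+ 3.
  by rewrite -expRM_natl; congr expR; rewrite mulrC -mulrA mulVf ?mulr1 // pnatr_eq0.
have h : 0 <= z / 3 <= expR (z / 3).
  apply/andP; split; first by apply: divr_ge0.
  apply: le_trans (expR_ge1Dx _); lra.
have -> : z ^+ 3 / 27 = (z / 3) ^+ 3 by rewrite expr_div_n; congr (_ / _); rewrite -natrX.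
by apply: lerXn2r; rewrite ?posrE ?nnegrE ?expR_ge0 //; case/andP: h.
Qed.

Lemma expR_sq (R : realType) (z : R) : 0 <= z -> z ^+ 2 / 4 <= expR z.
Proof.
move=> z0.
have -> : expR z = expR (z / 2) ^+ 2.
  by rewrite -expRM_natl; congr expR; rewrite mulrC -mulrA mulVf ?mulr1 // pnatr_eq0.
have h : 0 <= z / 2 <= expR (z / 2).
  apply/andP; split; first by apply: divr_ge0.
  apply: le_trans (expR_ge1Dx _); lra.
have -> : z ^+ 2 / 4 = (z / 2) ^+ 2 by rewrite expr_div_n; congr (_ / _); rewrite -natrX.
by apply: lerXn2r; rewrite ?nnegrE ?expR_ge0 //; case/andP: h.
Qed.

Lemma auxC (R : realType) (M L al x : R) : (M + 1) * L <= al * x + 2 * L ->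
  - al * x - 2 * L <= (M + 1) * - L.
Proof. move=> h; lra. Qed.

Lemma auxD (R : realType) (M Y : R) : M <= Y + 1 -> M + 1 <= Y + 2.
Proof. move=> h; lra. Qed.

Lemma auxStD (R : realType) (N M A : R) : M <= A + 1 -> A <= N / 2 -> N / 2 <= N + 1 - M.
Proof. move=> h1 h2; lra. Qed.

Lemma auxG (R : realType) (a x M : R) : 0 < a -> 1 <= x -> M <= a * x + 1 ->
  M * (x + 1) <= 2 * (a + 1) * x ^+ 2.
Proof.
move=> a0 x1 hM.
have h1 : M * (x + 1) <= (a * x + 1) * (x + 1) by apply: ler_wpM2r => //; lra.
have h2 : x <= x * x by rewrite -{1}[x]mulr1; apply: ler_wpM2l; lra.
have h3 : a * x <= a * (x * x) by apply: ler_wpM2l => //; lra.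
rewrite expr2; nra.
Qed.

Lemma auxExpo (R : realType) (M x Y a le A : R) :
  M * (x + 1) <= 2 * (a + 1) * x ^+ 2 -> (2 * a + 3) * x ^+ 2 <= Y ->
  x <= x ^+ 2 -> A < x -> - A <= le -> M * (x + 1) - Y < le.
Proof. move=> h1 h2 h3 h4 h5; lra. Qed.

Lemma asymp (R : realType) (p alpha eps : R) : 0 < p -> p < 1 -> 0 < alpha -> alpha < 1 ->
  0 < eps -> exists N : nat, forall n : nat, (N <= n)%N ->
  (2 <= n)%N /\ exists m : nat, skel_dim alpha p n + 1 = m%:Z /\
    (n.+1)%:R ^+ m * (1 - p ^+ m.+1) ^+ (n.+1 - m) < eps.
Proof.
move=> p0 p1 a0 a1 e0.
pose L := ln (p^-1).
have L0 : 0 < L by apply: ln_gt0; rewrite invf_gt1.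
have pE : p = expR (- L) by rewrite /L lnV ?posrE // opprK lnK // posrE.
pose a := alpha / L.
have a0' : 0 < a by apply: divr_gt0.
have aL : a * L = alpha by rewrite /a mulrVK ?unitfE ?gt_eqF.
pose beta := 1 - alpha.
have b0 : 0 < beta by rewrite /beta subr_gt0.
pose c := p ^+ 2 * beta ^+ 3 / 54.
have c0 : 0 < c by rewrite /c !mulr_gt0 ?exprn_gt0 ?invr_gt0 ?ltr0n.
pose X0 := 1 + 8 * a + (2 * a + 3) / c + `|ln eps|.
exists (maxn 2 (Num.Def.archi_bound (expR X0))) => n.
rewrite geq_max => /andP[n2 nN]; split => //.
have nX : expR X0 < n%:R.
  apply: lt_le_trans (archi_boundP (expR_ge0 X0)) _; by rewrite ler_nat.
have n0 : 0 < (n%:R : R) by apply: lt_trans nX; apply: expR_gt0.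
pose x := ln (n%:R : R).
have nE : (n%:R : R) = expR x by rewrite /x lnK // posrE.
have xX : X0 < x by rewrite -ltr_expR -nE.
have xge : 1 <= x /\ 8 * a <= x /\ (2 * a + 3) / c <= x /\ `|ln eps| < x.
  have h1 : 0 <= 8 * a by apply: mulr_ge0; [lra | exact: ltW].
  have h2 : 0 <= (2 * a + 3) / c by apply: divr_ge0; [lra | exact: ltW].
  have h3 : 0 <= `|ln eps| by [].
  rewrite /X0 in xX; split; [lra | split; [lra | split; lra]].
case: xge => x1 [xa [xc xe]].
set k := skel_dim alpha p n.
have k0 : 0 <= k.
  rewrite /k /skel_dim floor_ge0; apply: mulr_ge0; first exact: ltW.
  apply: divr_ge0; last exact: ltW.
  rewrite -/x; lra.
exists (absz (k + 1)).
set m := absz (k + 1).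
have km : k + 1 = m%:Z by rewrite /m gez0_abs // addr_ge0.
split => //.
have mR : (m%:R : R) <= a * x + 1.
  have -> : (m%:R : R) = (k + 1)%:~R by rewrite km.
  rewrite intrD lerD2r.
  apply: le_trans (floor_le _) _; rewrite /a le_eqVlt; apply/orP; left; apply/eqP.
  by rewrite mulrAC -mulrA.

have ax : a * x <= expR x / 2.
  have := expR_sq (ltW (lt_le_trans ltr01 x1)).
  have : a * x <= x ^+ 2 / 8.
    rewrite expr2; have : 0 <= x by lra. move=> x0'.
    have : a * x * 8 <= x * x by rewrite mulrAC; apply: ler_wpM2r => //; lra.
    lra.
  lra.
have mn : (m <= n.+1)%N.
  rewrite -(ler_nat R); apply: le_trans mR _.
  have : 0 <= expR x := expR_ge0 x.
  rewrite -nE in ax *; rewrite -addn1 natrD; lra.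
set yv := p ^+ m.+1.
set Np := (n.+1 - m)%N.
have yv01 : 0 <= yv <= 1.
  by apply/andP; split; [apply: exprn_ge0; exact: ltW | apply: exprn_ile1; exact: ltW].
have stA : (n.+1)%:R ^+ m <= expR (m%:R * (x + 1)) :> R.
  rewrite expRM_natl; apply: lerXn2r; rewrite ?nnegrE ?ler0n ?expR_ge0 //.
  rewrite expRD -nE -addn1 natrD.
  have := expR_ge1Dx (1 : R); have : 1 <= (n%:R : R) by rewrite ler1n; exact: ltnW.
  move=> h1 h2; nra.
have stB : (1 - yv) ^+ Np <= expR (- (yv * Np%:R)).
  rewrite -mulNr mulrC expRM_natl; apply: lerXn2r; rewrite ?nnegrE ?expR_ge0 //.
    by case/andP: yv01 => _ h; rewrite subr_ge0.
  by have := expR_ge1Dx (- yv); rewrite addrC.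
have stC : expR (- alpha * x - 2 * L) <= yv.
  rewrite /yv pE -expRM_natl ler_expR.
  have -> : (m.+1%:R : R) = m%:R + 1 by rewrite -addn1 natrD.
  have h : (m%:R + 1) * L <= (a * x + 2) * L.
    apply: ler_wpM2r; first exact: ltW.
    exact: auxD mR.
  have e : (a * x + 2) * L = alpha * x + 2 * L by rewrite mulrDl mulrAC aL.
  rewrite e in h; exact: auxC h.
have stD : expR x / 2 <= Np%:R.
  rewrite /Np natrB // -[n.+1]addn1 natrD nE; exact: auxStD mR ax.
have e1 : expR (- alpha * x - 2 * L) * expR x = p ^+ 2 * expR (beta * x).
  rewrite -expRD pE -expRM_natl -expRD; congr expR; rewrite /beta; ring.
have stE : p ^+ 2 / 2 * expR (beta * x) <= yv * Np%:R.
  have h := ler_pM (expR_ge0 _) (divr_ge0 (expR_ge0 x) (ler0n R 2)) stC stD.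
  apply: le_trans h; rewrite mulrA e1 mulrAC; exact: lexx.
have x0 : 0 <= x := le_trans ler01 x1.
have stF : (beta * x) ^+ 3 / 27 <= expR (beta * x).
  by apply: expR_cube; exact: mulr_ge0 (ltW b0) x0.
have stG : m%:R * (x + 1) <= 2 * (a + 1) * x ^+ 2 := auxG a0' x1 mR.
have stH : c * x ^+ 3 = p ^+ 2 / 2 * ((beta * x) ^+ 3 / 27).
  by rewrite /c exprMn; field.
have cx : (2 * a + 3) <= c * x.
  by move: xc; rewrite ler_pdivrMr // [x * c]mulrC.
have expo : m%:R * (x + 1) - yv * Np%:R < ln eps.
  have p2 : 0 <= p ^+ 2 / 2 by apply: divr_ge0; [apply: exprn_ge0; exact: ltW | exact: ler0n].
  have h1 : p ^+ 2 / 2 * ((beta * x) ^+ 3 / 27) <= p ^+ 2 / 2 * expR (beta * x).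
    by apply: ler_wpM2l.
  have h2 : (2 * a + 3) * x ^+ 2 <= c * x * x ^+ 2.
    by apply: ler_wpM2r => //; apply: exprn_ge0.
  have h3 : c * x * x ^+ 2 = c * x ^+ 3 by rewrite [x ^+ 3]exprS mulrA.
  have h4 : (2 * a + 3) * x ^+ 2 <= yv * Np%:R.
    apply: le_trans h2 _; rewrite h3 stH; apply: le_trans h1 stE.
  have h5 : x <= x ^+ 2 by rewrite expr2 -{1}[x]mulr1; apply: ler_wpM2l.
  have h6 : - `|ln eps| <= ln eps by rewrite lerNl -normrN ler_norm.
  exact: auxExpo stG h4 h5 xe h6.
apply: le_lt_trans (_ : expR (m%:R * (x + 1)) * expR (- (yv * Np%:R)) < eps).
  apply: ler_pM => //; apply: exprn_ge0; first by rewrite ler0n.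
  by case/andP: yv01 => _ h; rewrite subr_ge0.
by rewrite -expRD -[X in _ < X](@lnK _ eps) ?posrE // ltr_expR.
Qed.
End Aux.
Import Aux.

Theorem corollary6p4 (R : realType) (p P : R)
  (ps : forall n : nat, {set 'I_n.+1} -> R) (alpha : R) :
  0 < p -> p <= P -> P < 1 ->
  (forall (n : nat) (s : {set 'I_n.+1}), proper_face s -> p <= ps n s <= P) ->
  0 < alpha < 1 ->
  forall eps : R, 0 < eps ->
  exists N : nat, forall n : nat, (N <= n)%N ->
    1 - eps < lower_prob (ps n)
                (fun Y => nerve_contains_skeleton Y (skel_dim alpha p n)).
Proof.
move=> p0 pP P1 hps /andP[a0 a1] eps e0.
have p1 : p < 1 := le_lt_trans pP P1.
have [N HN] := asymp p0 p1 a0 a1 e0.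
exists N => n nN.
have [n2 [m [km hB]]] := HN n nN.
have h := @lower_prob_ge R n (ps n) p P p0 pP P1 (hps n) _ m n2 km.
apply: lt_le_trans h; by rewrite ltrD2l ltrN2.
Qed.
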